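(* For any $d\ge1$, $T\ge1$ and any unit vectors $|\psi_1\rangle,\dots,|\psi_T\rangle\in\mathbb{C}^d$, $$\sum_{\pi\in S_T}\mathrm{Tr}\!\left(\pi\bigotimes_{t=1}^T|\psi_t\rangle\langle\psi_t|\right)\ \ge\ 1.$$
   Context: $S_T$ is the symmetric group on $T$ letters. For $\pi\in S_T$, the corresponding permutation operator on $(\mathbb{C}^d)^{\otimes T}$ (also denoted $\pi$) is the linear map with $\pi(|v_1\rangle\otimes\cdots\otimes|v_T\rangle)=|v_{\pi^{-1}(1)}\rangle\otimes\cdots\otimes|v_{\pi^{-1}(T)}\rangle$. *)

(* Defs.v *)
From HB Require Import structures.
From mathcomp Require Import all_boot all_order all_algebra all_fingroup.
From mathcomp Require Import complex Rstruct.
From Stdlib Require Import Reals.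
Set Implicit Arguments. Unset Strict Implicit. Unset Printing Implicit Defensive.
Import Order.TTheory GRing.Theory Num.Theory.
Local Open Scope ring_scope.

Definition C : Type := complex Rdefinitions.R.

(* Standard product basis of (C^d)^{⊗T}: e_f = e_{f 1} ⊗ ... ⊗ e_{f T}. *)
Definition tbasis (d T : nat) := {ffun 'I_T -> 'I_d}.

(* Linear operators on (C^d)^{⊗T}, given by their matrix in the product basis. *)
Definition top (d T : nat) := tbasis d T -> tbasis d T -> C.

Definition top_mul d T (X Y : top d T) : top d T :=
  fun f g => \sum_(h : tbasis d T) X f h * Y h g.

Definition top_trace d T (X : top d T) : C := \sum_(f : tbasis d T) X f f.

(* Permutation operator: pi (v_1 ⊗ ... ⊗ v_T) = v_{pi^-1 1} ⊗ ... ⊗ v_{pi^-1 T},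
   i.e. pi e_f = e_{f o pi^-1}; matrix entry (g, f) = [g == f o pi^-1]. *)
Definition perm_op d T (s : 'S_T) : top d T :=
  fun g f => (g == [ffun t => f ((s^-1)%g t)] :> tbasis d T)%:R.

Definition tensor_ops d T (A : 'I_T -> 'M[C]_d) : top d T :=
  fun f g => \prod_(t < T) A t (f t) (g t).

Definition ketbra d (v : 'cV[C]_d) : 'M[C]_d := v *m (map_mx Num.conj v)^T.

Definition unit_vec d (v : 'cV[C]_d) : Prop := \sum_(i < d) `|v i 0| ^+ 2 = 1.

(* Main.v *)
Require Import Defs.
From mathcomp Require Import all_boot all_order all_algebra all_fingroup.
From mathcomp Require Import complex Rstruct ring.
Set Implicit Arguments. Unset Strict Implicit. Unset Printing Implicit Defensive.
Import Order.TTheory GRing.Theory Num.Theory.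
Local Open Scope ring_scope.

Section Perm.
Variable n : nat.

Lemma lift_perm_exists (i j : 'I_n.+1) (s : 'S_n.+1) :
  s i = j -> exists s' : 'S_n, s = lift_perm i j s'.
Proof.
pose ulsf i0 (s0 : 'S_n.+1) k := odflt k (unlift (s0 i0) (s0 (lift i0 k))).
have ulsfK i0 (s0 : 'S_n.+1) k: lift (s0 i0) (ulsf i0 s0 k) = s0 (lift i0 k).
  rewrite /ulsf; have:= neq_lift i0 k.
  by rewrite -(can_eq (permK s0)) => /unlift_some[] ? ? ->.
have inj_ulsf: injective (ulsf i s).
  apply: can_inj (ulsf (s i) s^-1%g) _ => k'.
  by rewrite {1}/ulsf ulsfK !permK liftK.
move=> si; exists (perm inj_ulsf); apply/permP=> k.
case: (unliftP i k) => [k'|] ->; rewrite ?lift_perm_id //.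
by rewrite lift_perm_lift -si permE ulsfK.
Qed.

Lemma sum_lift_perm (R : nmodType) (i j : 'I_n.+1) (F : 'S_n.+1 -> R) :
  \sum_(s : 'S_n.+1 | s i == j) F s = \sum_(s : 'S_n) F (lift_perm i j s).
Proof.
rewrite (reindex (lift_perm i j)); last first.
  pose ulsf i0 (s : 'S_n.+1) k := odflt k (unlift (s i0) (s (lift i0 k))).
  have ulsfK i0 (s : 'S_n.+1) k: lift (s i0) (ulsf i0 s k) = s (lift i0 k).
    rewrite /ulsf; have:= neq_lift i0 k.
    by rewrite -(can_eq (permK s)) => /unlift_some[] ? ? ->.
  have inj_ulsf: injective (ulsf i _).
    move=> s; apply: can_inj (ulsf (s i) s^-1%g) _ => k'.
    by rewrite {1}/ulsf ulsfK !permK liftK.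
  exists (fun s => perm (inj_ulsf s)) => [s _ | s].
    by apply/permP=> k'; rewrite permE /ulsf lift_perm_lift lift_perm_id liftK.
  move/(s _ =P _) => si0; apply/permP=> k.
  case: (unliftP i k) => [k'|] ->; rewrite ?lift_perm_id //.
  by rewrite lift_perm_lift -si0 permE ulsfK.
by apply: eq_bigl => s; rewrite lift_perm_id eqxx.
Qed.

End Perm.

Section Main.
Variable d : nat.
Notation J := 'I_d.

Definition Fv n (x : 'I_n -> J -> C) (h : {ffun 'I_n -> J}) : C :=
  \sum_(s : 'S_n) \prod_(t < n) x t (h (s t)).

Definition comp n (h : {ffun 'I_n -> J}) (s : 'S_n) : {ffun 'I_n -> J} :=
  [ffun t => h (s t)].

Lemma Fv_perm n x (h : {ffun 'I_n -> J}) (s : 'S_n) : Fv x (comp h s) = Fv x h.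
Proof.
rewrite /Fv; transitivity (\sum_(u : 'S_n) \prod_(t < n) x t (h ((u * s)%g t))).
  apply: eq_bigr => u _. apply: eq_bigr => t _. by rewrite /comp ffunE permM.
by symmetry; exact: (reindex_inj (mulIg s) (F := fun u : 'S_n => \prod_(t < n) x t (h (u t)))).
Qed.

Lemma lift_max_widen n (t : 'I_n) : lift ord_max t = widen_ord (leqnSn n) t.
Proof. by apply: val_inj; rewrite /= /bump leqNgt ltn_ord. Qed.

Definition dropf n (k : 'I_n.+1) (h : {ffun 'I_n.+1 -> J}) : {ffun 'I_n -> J} :=
  [ffun t => h (lift k t)].

Lemma Fv_rec n (x : 'I_n.+1 -> J -> C) h :
  Fv x h = \sum_(k < n.+1) x ord_max (h k) * Fv (fun t => x (lift ord_max t)) (dropf k h).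
Proof.
rewrite /Fv (partition_big (fun s : 'S_n.+1 => s ord_max) xpredT) //=.
apply: eq_bigr => k _; rewrite sum_lift_perm big_distrr /=.
apply: eq_bigr => s _; rewrite big_ord_recr /= lift_perm_id mulrC; congr (_ * _).
apply: eq_bigr => t _; rewrite -lift_max_widen lift_perm_lift ffunE //.
Qed.


Definition ext n (k : 'I_n.+1) (a : J) (g : {ffun 'I_n -> J}) : {ffun 'I_n.+1 -> J} :=
  [ffun i => if unlift k i is Some t then g t else a].

Lemma ext_k n (k : 'I_n.+1) a g : ext k a g k = a.
Proof. by rewrite ffunE unlift_none. Qed.

Lemma ext_lift n (k : 'I_n.+1) a g t : ext k a g (lift k t) = g t.
Proof. by rewrite ffunE liftK. Qed.

Lemma dropf_ext n (k : 'I_n.+1) a g : dropf k (ext k a g) = g.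
Proof. by apply/ffunP => t; rewrite ffunE ext_lift. Qed.

Lemma sum_split n (k : 'I_n.+1) (G : {ffun 'I_n.+1 -> J} -> C) :
  \sum_h G h = \sum_(g : {ffun 'I_n -> J}) \sum_(a : J) G (ext k a g).
Proof.
rewrite pair_big /=.
rewrite (reindex (fun p : {ffun 'I_n -> J} * J => ext k p.2 p.1)) //=.
exists (fun h => (dropf k h, h k)) => [[g a] _ | h _] /=.
  by rewrite dropf_ext ext_k.
apply/ffunP => i; rewrite ffunE; case: (unliftP k i) => [t|] ->.
  by rewrite ffunE.
by [].
Qed.

Definition nrm (v : J -> C) := \sum_i (v i)^* * v i.
Definition Q n (x : 'I_n -> J -> C) := \sum_(h : {ffun 'I_n -> J}) (Fv x h)^* * Fv x h.

Lemma nrm_ge0 v : 0 <= nrm v.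
Proof. by apply: sumr_ge0 => i _; rewrite mulrC mul_conjC_ge0. Qed.

Lemma Q_ge0 n x : 0 <= @Q n x.
Proof. by apply: sumr_ge0 => i _; rewrite mulrC mul_conjC_ge0. Qed.

Lemma diag_term n (k : 'I_n.+1) (z : J -> C) (y : 'I_n -> J -> C) :
  \sum_(h : {ffun 'I_n.+1 -> J}) (z (h k) * Fv y (dropf k h))^* * (z (h k) * Fv y (dropf k h))
  = nrm z * Q y.
Proof.
rewrite (sum_split k) /nrm /Q big_distrl /= exchange_big /=.
apply: eq_bigr => a _; rewrite big_distrr /=; apply: eq_bigr => g _.
by rewrite ext_k dropf_ext rmorphM mulrACA.
Qed.


Definition upd n (g : {ffun 'I_n -> J}) (l : 'I_n) (a : J) : {ffun 'I_n -> J} :=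
  [ffun t => if t == l then a else g t].

Lemma upd_ext n (l : 'I_n.+1) a b r : upd (ext l b r) l a = ext l a r.
Proof.
apply/ffunP => t; rewrite !ffunE; case: (unliftP l t) => [t'|] ->.
  by rewrite eq_sym (negbTE (neq_lift _ _)).
by rewrite eqxx.
Qed.

Lemma Fv_sym n (y : 'I_n -> J -> C) (k l : 'I_n.+1) (h : {ffun 'I_n.+1 -> J}) :
  Fv y (dropf l h) = Fv y (dropf k (comp h (tperm k l))).
Proof.
have [tau Htau] := lift_perm_exists (tpermL k l).
rewrite -(Fv_perm y _ tau); congr (Fv y _).
apply/ffunP => t; rewrite !ffunE.
by rewrite Htau lift_perm_lift.
Qed.

Lemma dropf_comp_ext n (k : 'I_n.+2) (l' : 'I_n.+1) a g :
  dropf k (comp (ext k a g) (tperm k (lift k l'))) = upd g l' a.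
Proof.
apply/ffunP => t; rewrite !ffunE.
have [->|ne] := eqVneq t l'; first by rewrite tpermR unlift_none.
rewrite tpermD ?liftK // ?neq_lift //.
by rewrite (inj_eq (@lift_inj _ k)) eq_sym.
Qed.

Lemma offdiag_ge0 n (k l : 'I_n.+1) (z : J -> C) (y : 'I_n -> J -> C) : k != l ->
  0 <= \sum_(h : {ffun 'I_n.+1 -> J})
         (z (h k) * Fv y (dropf k h))^* * (z (h l) * Fv y (dropf l h)).
Proof.
case: n k l y => [|n] k l y kl.
  by move: kl; rewrite (ord1 k) (ord1 l) eqxx.
case: (unliftP k l) => [l'|] El; last by rewrite El eqxx in kl.
under eq_bigr => h _ do rewrite (Fv_sym y k l h).
rewrite (sum_split k) El.
under eq_bigr => g _ do (under eq_bigr => a _ do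
  rewrite ext_k dropf_ext ext_lift dropf_comp_ext).
rewrite (sum_split l'); apply: sumr_ge0 => r _.
under eq_bigr => b _ do (under eq_bigr => a _ do rewrite ext_k upd_ext).
set w := \sum_(a : J) (z a)^* * Fv y (ext l' a r).
suff -> : \sum_(b : J) \sum_(a : J) (z a * Fv y (ext l' b r))^* * (z b * Fv y (ext l' a r))
   = w^* * w by rewrite mulrC; apply: mul_conjC_ge0.
rewrite /w rmorph_sum big_distrl /=; apply: eq_bigr => b _.
rewrite big_distrr /=; apply: eq_bigr => a _.
rewrite !rmorphM /= (conjCK (z b)). ring.

Qed.


Lemma Q_step n (x : 'I_n.+1 -> J -> C) :
  n.+1%:R * (nrm (x ord_max) * Q (fun t => x (lift ord_max t))) <= Q x.
Proof.
set z := x ord_max; set y := fun t => x (lift ord_max t).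
rewrite /Q.
under [X in _ <= X]eq_bigr => h _ do
  rewrite Fv_rec -/z -/y rmorph_sum big_distrl /=
          (eq_bigr _ (fun k _ => big_distrr _ _ _)) /=.
rewrite exchange_big /=.
rewrite [X in X <= _]mulr_natl -[X in _ *+ X](card_ord n.+1) -sumr_const.
apply: ler_sum => k _.
rewrite exchange_big (bigD1 k) //= diag_term lerDl.
apply: sumr_ge0 => l lk.
by apply: offdiag_ge0; rewrite eq_sym.
Qed.

Lemma Q_lower n (x : 'I_n -> J -> C) : n`!%:R * \prod_(t < n) nrm (x t) <= Q x.
Proof.
elim: n x => [|n IH] x.
  rewrite big_ord0 mulr1 /Q /Fv.
  have E : forall h : {ffun 'I_0 -> J}, \sum_(s : 'S_0) \prod_(t < 0) x t (h (s t)) = 1.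
    move=> h; rewrite (eq_bigr (fun _ => 1)); last by move=> s _; rewrite big_ord0.
    by rewrite sumr_const card_Sn.
  under eq_bigr => h _ do rewrite E.
  rewrite sumr_const card_ffun !card_ord expn0 rmorph1 mulr1.
  by rewrite rmorph1 mulr1n.
apply: le_trans (Q_step x).
have -> : (n.+1)`!%:R * \prod_(t < n.+1) nrm (x t) =
  n.+1%:R * (nrm (x ord_max) * (n`!%:R * \prod_(t < n) nrm (x (lift ord_max t)))).
  rewrite big_ord_recr /= factS natrM.
  rewrite (eq_bigr (fun t => nrm (x (lift ord_max t)))); last first.
    by move=> t _; rewrite lift_max_widen.
  ring.
apply: ler_wpM2l; first exact: ler0n.
apply: ler_wpM2l; first exact: nrm_ge0.
exact: IH.
Qed.


Lemma comp_inj n (s : 'S_n) : injective (fun h : {ffun 'I_n -> J} => comp h s).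
Proof.
move=> h h' E; apply/ffunP => t.
have := congr1 (fun f : {ffun 'I_n -> J} => f ((s^-1)%g t)) E.
by rewrite /= !ffunE permKV.
Qed.

Lemma average n (x : 'I_n -> J -> C) :
  n`!%:R * \sum_(h : {ffun 'I_n -> J}) (\prod_(t < n) x t (h t)) * (Fv x h)^* = Q x.
Proof.
rewrite -card_Sn -sumr_const /Q.
transitivity (\sum_(s : 'S_n) \sum_(h : {ffun 'I_n -> J})
                (\prod_(t < n) x t (h (s t))) * (Fv x h)^*).
  rewrite big_distrl /=; apply: eq_bigr => s _; rewrite mul1r.
  rewrite (reindex_inj (@comp_inj _ s)) /=; apply: eq_bigr => h _.
  rewrite Fv_perm; congr (_ * _); apply: eq_bigr => t _; by rewrite ffunE.
rewrite exchange_big /=; apply: eq_bigr => h _.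
by rewrite -big_distrl /= mulrC.
Qed.

End Main.

Theorem mainTheorem8 (d T : nat) (hd : (1 <= d)%N) (hT : (1 <= T)%N)
  (psi : 'I_T -> 'cV[C]_d) (hpsi : forall t, unit_vec (psi t)) :
  1 <= \sum_(s : 'S_T) top_trace (top_mul (@perm_op d T s) (tensor_ops (fun t => ketbra (psi t)))).
Proof.
pose x := fun (t : 'I_T) (i : 'I_d) => psi t i 0.
have Hk : forall t i j, ketbra (psi t) i j = x t i * (x t j)^*.
  by move=> t i j; rewrite /ketbra !mxE big_ord1 !mxE.
have E1 : forall s : 'S_T,
  top_trace (top_mul (@perm_op d T s) (tensor_ops (fun t => ketbra (psi t))))
  = \sum_(h : {ffun 'I_T -> 'I_d}) (\prod_(t < T) x t (h t)) *
       (\prod_(t < T) x t (h ((s^-1)%g t)))^*.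
  move=> s; rewrite /top_trace /top_mul exchange_big /=; apply: eq_bigr => h _.
  rewrite (bigD1 [ffun t => h ((s^-1)%g t)]) //= /perm_op eqxx mul1r big1 ?addr0.
    rewrite /tensor_ops rmorph_prod -big_split /=; apply: eq_bigr => t _.
    by rewrite Hk ffunE.
  by move=> f /negbTE ->; rewrite mul0r.
under eq_bigr => s _ do rewrite E1.
rewrite exchange_big /=.
under eq_bigr => h _ do rewrite -big_distrr /= -rmorph_sum.
under eq_bigr => h _ do rewrite (reindex_inj invg_inj) /=.
set S := \sum_h _.
have HS : T`!%:R * S = Q x.
  rewrite -average; congr (_ * _); apply: eq_bigr => h _; congr (_ * _ ^*).
  by apply: eq_bigr => s _; apply: eq_bigr => t _; rewrite invgK.
have Hn : forall t, nrm (x t) = 1.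
  move=> t; rewrite -(hpsi t) /nrm; apply: eq_bigr => i _.
  by rewrite normCK mulrC.
have := Q_lower x; rewrite -HS (eq_bigr (fun _ => 1)) ?big1_eq ?mulr1; last first.
  by move=> t _; rewrite Hn.
rewrite -[X in X <= _]mulr1 ler_pM2l //.
by rewrite ltr0n fact_gt0.
Qed.
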